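(* Let $J\subset I$, $u\in W$, $w\in W^J$ and $v\in W_J$. Write $uwv=w'v'$ with $w'\in W^J$ and $v'\in W_J$. If $l(uwv)=l(wv)-l(u)$, then $w'\le w$. If moreover $w'=w$, then $\{w^{-1}(\alpha_i): i\in\mathrm{supp}(u)\}\subset\{\alpha_j:j\in J\}$.
   Context: $W$ is the Weyl group of a semisimple group with simple roots $\alpha_i$, $i\in I$, simple reflections $s_i$, length $l$ and Bruhat order $\le$. For $J\subset I$, $W_J$ is the subgroup generated by $\{s_j:j\in J\}$ and $W^J$ the set of minimal length representatives of $W/W_J$. For $u\in W$, $\mathrm{supp}(u)\subset I$ is the set of $i$ such that $s_i$ occurs in some (equivalently any) reduced expression of $u$. *)

(* Defs.v *)
From HB Require Import structures.
From mathcomp Require Import all_boot all_order all_algebra.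
From Stdlib Require Import ClassicalEpsilon.
Set Implicit Arguments. Unset Strict Implicit. Unset Printing Implicit Defensive.
Import Order.TTheory GRing.Theory Num.Theory.
Local Open Scope ring_scope.

(* Weyl group of a semisimple group, realized faithfully as the group of
   matrices (over rat, acting on column vectors written in the basis of
   simple roots) generated by the simple reflections s_i determined by the
   Cartan matrix A (convention: s_i(alpha_j) = alpha_j - A i j * alpha_i). *)

Section Weyl.
Variable n : nat.
Variable A : 'M[int]_n.

Definition cartan_matrix : Prop :=
  [/\ forall i, A i i = 2,
      forall i j, i != j -> A i j <= 0
    & forall i j, (A i j == 0) = (A j i == 0)].

(* Finite type (= Cartan matrix of a semisimple group / reduced root system):
   symmetrizable with positive definite symmetrization D A. *)
Definition finite_type : Prop :=
  cartan_matrix /\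
  exists d : 'I_n -> rat,
    [/\ forall i, 0 < d i,
        forall i j, d i * (A i j)%:~R = d j * (A j i)%:~R
      & forall x : 'cV[rat]_n, x != 0 ->
          0 < \sum_i \sum_j x i 0 * d i * (A i j)%:~R * x j 0].

Definition alpha (i : 'I_n) : 'cV[rat]_n := delta_mx i 0.

Definition sref (i : 'I_n) : 'M[rat]_n :=
  \matrix_(k, j) ((k == j)%:R - (k == i)%:R * (A i j)%:~R).

Definition word_mx (s : seq 'I_n) : 'M[rat]_n :=
  foldr (fun i M => sref i *m M) 1%:M s.

Definition inW (M : 'M[rat]_n) : Prop := exists s, M = word_mx s.

Definition inWJ (J : {set 'I_n}) (M : 'M[rat]_n) : Prop :=
  exists s, all (fun i => i \in J) s /\ M = word_mx s.

Definition is_length (M : 'M[rat]_n) (k : nat) : Prop :=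
  (exists s, size s = k /\ word_mx s = M) /\
  (forall s, word_mx s = M -> (k <= size s)%N).

Definition wlen (M : 'M[rat]_n) : nat :=
  epsilon (inhabits 0%N) (is_length M).

Definition is_reflection (t : 'M[rat]_n) : Prop :=
  exists x i, inW x /\ t = x *m sref i *m invmx x.

Inductive bruhat_le : 'M[rat]_n -> 'M[rat]_n -> Prop :=
| bruhat_refl x : bruhat_le x x
| bruhat_step x y t : bruhat_le x y -> is_reflection t ->
    (wlen y < wlen (y *m t))%N -> bruhat_le x (y *m t).

Definition minrep (J : {set 'I_n}) (w : 'M[rat]_n) : Prop :=
  inW w /\ forall v, inWJ J v -> (wlen w <= wlen (w *m v))%N.

Definition supp (u : 'M[rat]_n) : 'I_n -> Prop :=
  fun i => exists s, word_mx s = u /\ size s = wlen u /\ i \in s.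

End Weyl.

(* Main.v *)
Require Import Defs.
From HB Require Import structures.
From mathcomp Require Import all_boot all_order all_algebra.
From mathcomp Require Import ring lra zify.
From Stdlib Require Import Classical ClassicalEpsilon FunctionalExtensionality PropExtensionality.
Set Implicit Arguments. Unset Strict Implicit. Unset Printing Implicit Defensive.
Import Order.TTheory GRing.Theory Num.Theory.
Local Open Scope ring_scope.

Lemma ex_min_nat (P : nat -> Prop) :
  (exists k, P k) -> exists k, P k /\ forall k', P k' -> (k <= k')%N.
Proof.
move=> [k0 Pk0]; elim/ltn_ind: k0 Pk0 => k0 IH Pk0.
case: (classic (exists k', P k' /\ (k' < k0)%N)) => [[k' [Pk' lt]]|nex].
  exact: IH Pk'.
exists k0; split => // k' Pk'; rewrite leqNgt; apply/negP => lt.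
by apply: nex; exists k'.
Qed.

Section Basics.
Variable n : nat.
Variable A : 'M[int]_n.
Hypothesis Hdiag : forall i, A i i = 2.

Definition rowA (i : 'I_n) : 'rV[rat]_n := \row_k (A i k)%:~R.
Definition fc (i : 'I_n) (x : 'cV[rat]_n) : rat := (rowA i *m x) 0 0.

Lemma fcD i x y : fc i (x + y) = fc i x + fc i y.
Proof. by rewrite /fc mulmxDr mxE. Qed.
Lemma fcZ i c x : fc i (c *: x) = c * fc i x.
Proof. by rewrite /fc -scalemxAr mxE. Qed.
Lemma fcN i x : fc i (- x) = - fc i x.
Proof. by rewrite /fc mulmxN mxE. Qed.
Lemma fcB i x y : fc i (x - y) = fc i x - fc i y.
Proof. by rewrite fcD fcN. Qed.
Lemma fc0 i : fc i 0 = 0.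
Proof. by rewrite /fc mulmx0 mxE. Qed.
Lemma fc_alpha i j : fc i (alpha j) = (A i j)%:~R.
Proof. by rewrite /fc /alpha -colE !mxE. Qed.

Lemma sref_vec i (x : 'cV[rat]_n) : sref A i *m x = x - fc i x *: alpha i.
Proof.
apply/matrixP => k l; rewrite ord1 !mxE /fc !mxE.
under eq_bigr => j _ do rewrite !mxE mulrBl.
rewrite sumrB (bigD1 k) //= eqxx mul1r big1 ?addr0; last first.
  by move=> j /negbTE; rewrite eq_sym => ->; rewrite mul0r.
congr (_ - _).
rewrite andbT mulr_suml; apply: eq_bigr => j _; rewrite !mxE mulrC mulrA.
by rewrite mulrAC [x j 0 * _]mulrC.
Qed.

Lemma mx_ext (M N : 'M[rat]_n) : (forall j, M *m alpha j = N *m alpha j) -> M = N.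
Proof.
move=> H; apply/matrixP => k j.
by have := congr1 (fun X : 'cV[rat]_n => X k 0) (H j); rewrite /alpha -!colE !mxE.
Qed.

Lemma mx_ext_vec (M N : 'M[rat]_n) : (forall x : 'cV[rat]_n, M *m x = N *m x) -> M = N.
Proof. by move=> H; apply: mx_ext. Qed.

Lemma sref_alpha_self i : sref A i *m alpha i = - alpha i.
Proof. by rewrite sref_vec fc_alpha Hdiag scaler_nat mulr2n opprD addNKr. Qed.

Lemma sref_alpha i j : sref A i *m alpha j = alpha j - (A i j)%:~R *: alpha i.
Proof. by rewrite sref_vec fc_alpha. Qed.

Lemma srefK i (x : 'cV[rat]_n) : sref A i *m (sref A i *m x) = x.
Proof.
rewrite [sref A i *m x]sref_vec mulmxBr -scalemxAr sref_alpha_self sref_vec.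
by rewrite scalerN opprK subrK.
Qed.

Lemma sref_invol i : sref A i *m sref A i = 1%:M.
Proof. by apply: mx_ext_vec => x; rewrite -mulmxA srefK mul1mx. Qed.

Notation W := (word_mx A).

Lemma W_cons i s : W (i :: s) = sref A i *m W s.
Proof. by []. Qed.
Lemma W_nil : W [::] = 1%:M.
Proof. by []. Qed.
Lemma W_cat s t : W (s ++ t) = W s *m W t.
Proof. by elim: s => [|i s IH] /=; rewrite ?mul1mx // IH mulmxA. Qed.
Lemma W_rcons s i : W (rcons s i) = W s *m sref A i.
Proof. by rewrite -cats1 W_cat /= mulmx1. Qed.
Lemma W_rev_mul s : W (rev s) *m W s = 1%:M.
Proof.
elim: s => [|i s IH]; first by rewrite /= mulmx1.
by rewrite rev_cons W_rcons W_cons -mulmxA (mulmxA (sref A i)) sref_invol mul1mx.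
Qed.
Lemma W_mul_rev s : W s *m W (rev s) = 1%:M.
Proof. by rewrite -{1}(revK s) W_rev_mul. Qed.
Lemma W_unit s : W s \in unitmx.
Proof. by case: (mulmx1_unit (W_mul_rev s)). Qed.
Lemma W_inv s : invmx (W s) = W (rev s).
Proof.
rewrite -[invmx _]mulmx1 -(W_mul_rev s) mulmxA mulVmx ?mul1mx //; exact: W_unit.
Qed.


Implicit Types (K : {set 'I_n}) (M N : 'M[rat]_n) (s t : seq 'I_n).
Definition Kw (K : {set 'I_n}) (s : seq 'I_n) := all (fun i => i \in K) s.
Definition isLen K (M : 'M[rat]_n) k :=
  (exists s, Kw K s /\ size s = k /\ W s = M) /\
  (forall s, Kw K s -> W s = M -> (k <= size s)%N).
Definition lenK K M := epsilon (inhabits 0%N) (isLen K M).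

Lemma lenK_spec K M : inWJ A K M -> isLen K M (lenK K M).
Proof.
move=> [s0 [Ks0 ->]].
have [k [[s [Ks [sz Ws]]] min]] :
  exists k, (exists s, Kw K s /\ size s = k /\ W s = W s0) /\
    forall k', (exists s, Kw K s /\ size s = k' /\ W s = W s0) -> (k <= k')%N.
  by apply: ex_min_nat; exists (size s0), s0.
apply: (epsilon_spec (inhabits 0%N) (isLen K (W s0))).
exists k; split; first by exists s.
by move=> t Kt Wt; apply: min; exists t.
Qed.

Lemma lenK_min K M s : Kw K s -> W s = M -> (lenK K M <= size s)%N.
Proof.
move=> Ks Ws; have [_ h] := lenK_spec (ex_intro _ s (conj Ks (esym Ws))).
exact: h.
Qed.

Lemma lenK_word K M : inWJ A K M -> exists s, [/\ Kw K s, size s = lenK K M & W s = M].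
Proof. by move=> /lenK_spec [[s [? [? ?]]] _]; exists s. Qed.

Lemma lenK_1 K : lenK K 1%:M = 0%N.
Proof. by apply/eqP; rewrite -leqn0; apply: (@lenK_min K _ [::]). Qed.

Lemma lenK_0 K M : inWJ A K M -> lenK K M = 0%N -> M = 1%:M.
Proof. by move=> /lenK_word [[|i s] [_ /= <- <-]]. Qed.

Lemma Kw_cat K s t : Kw K (s ++ t) = Kw K s && Kw K t.
Proof. by rewrite /Kw all_cat. Qed.
Lemma Kw_rev K s : Kw K (rev s) = Kw K s.
Proof. by rewrite /Kw all_rev. Qed.

Lemma inWJ_mul K M N : inWJ A K M -> inWJ A K N -> inWJ A K (M *m N).
Proof.
move=> [s [Ks ->]] [t [Kt ->]]; exists (s ++ t).
by rewrite -/(Kw K (s ++ t)) Kw_cat; split; [apply/andP|rewrite W_cat].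
Qed.

Lemma inWJ_sref K i : i \in K -> inWJ A K (sref A i).
Proof. by move=> iK; exists [:: i]; rewrite /= iK /= mulmx1. Qed.

Lemma inWJ_1 K : inWJ A K 1%:M.
Proof. by exists [::]. Qed.

Lemma inWJ_inv K M : inWJ A K M -> inWJ A K (invmx M).
Proof.
move=> [s [Ks ->]]; exists (rev s); rewrite W_inv; split => //.
by rewrite -/(Kw K (rev s)) Kw_rev.
Qed.

Lemma inWJ_unit K M : inWJ A K M -> M \in unitmx.
Proof. by move=> [s [_ ->]]; exact: W_unit. Qed.

Lemma lenK_mul K M N : inWJ A K M -> inWJ A K N ->
  (lenK K (M *m N) <= lenK K M + lenK K N)%N.
Proof.
move=> /lenK_word [s [Ks <- <-]] /lenK_word [t [Kt <- <-]].
by rewrite -size_cat; apply: lenK_min; rewrite ?Kw_cat ?Ks ?Kt // W_cat.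
Qed.

Lemma lenK_inv_le K M : inWJ A K M -> (lenK K (invmx M) <= lenK K M)%N.
Proof.
move=> /lenK_word [s [Ks <- <-]]; rewrite -size_rev; apply: lenK_min.
  by rewrite Kw_rev.
by rewrite W_inv.
Qed.

Lemma lenK_inv K M : inWJ A K M -> lenK K (invmx M) = lenK K M.
Proof.
move=> HM; apply/eqP; rewrite eqn_leq lenK_inv_le //=.
have := lenK_inv_le (inWJ_inv HM); rewrite invmxK //.
Qed.

Lemma lenK_sub K K' M : K \subset K' -> inWJ A K M -> (lenK K' M <= lenK K M)%N.
Proof.
move=> sub /lenK_word [s [Ks <- <-]]; apply: lenK_min.
  by apply/allP => i /(allP Ks) iK; apply: (subsetP sub).
by [].
Qed.

Lemma lenK_sref K i : i \in K -> (lenK K (sref A i) <= 1)%N.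
Proof. by move=> iK; apply: (@lenK_min K _ [:: i]); rewrite /Kw /= ?iK // mulmx1. Qed.

Lemma inW_WJ M : inW A M <-> inWJ A setT M.
Proof.
split; first by move=> [s ->]; exists s; split => //; apply/allP => i; rewrite in_setT.
by move=> [s [_ ->]]; exists s.
Qed.

Lemma wlenE M : wlen A M = lenK setT M.
Proof.
rewrite /wlen /lenK; congr (epsilon _ _); apply: functional_extensionality => k.
apply: propositional_extensionality; rewrite /is_length /isLen; split.
  move=> [[s [h1 h2]] h3]; split; first by exists s; split => //; apply/allP=> i; rewrite in_setT.
  by move=> s1 _; apply: h3.
move=> [[s [_ h]] h3]; split; first by exists s.
by move=> s1 Ws; apply: h3 => //; apply/allP=> i; rewrite in_setT.
Qed.

Lemma lenK_mulr K M i : inWJ A K M -> i \in K ->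
  (lenK K (M *m sref A i) <= (lenK K M).+1)%N.
Proof.
move=> HM iK; apply: leq_trans (lenK_mul HM (inWJ_sref iK)) _.
by rewrite -addn1 leq_add2l lenK_sref.
Qed.

Lemma lenK_mull K M i : inWJ A K M -> i \in K ->
  (lenK K (sref A i *m M) <= (lenK K M).+1)%N.
Proof.
move=> HM iK; apply: leq_trans (lenK_mul (inWJ_sref iK) HM) _.
by rewrite addnC -addn1 leq_add2l lenK_sref.
Qed.

Fixpoint altb (i j : 'I_n) (c : bool) (k : nat) : seq 'I_n :=
  match k with
  | 0 => [::]
  | k'.+1 => rcons (altb i j (~~ c) k') (if c then i else j)
  end.

Definition stp (a b cc ee : rat) (c : bool) (pq : rat * rat) : rat * rat :=
  if c then (- pq.1 - cc - a * pq.2, pq.2) else (pq.1, - pq.2 - ee - b * pq.1).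

Fixpoint Gf (a b cc ee : rat) (c : bool) (k : nat) (pq : rat * rat) : rat * rat :=
  match k with
  | 0 => pq
  | k'.+1 => Gf a b cc ee (~~ c) k' (stp a b cc ee c pq)
  end.

Definition vec2 (i j : 'I_n) (pq : rat * rat) : 'cV[rat]_n :=
  pq.1 *: alpha i + pq.2 *: alpha j.

Lemma act_altb i j (x0 : 'cV[rat]_n) c k pq :
  W (altb i j c k) *m (x0 + vec2 i j pq) =
  x0 + vec2 i j (Gf (A i j)%:~R (A j i)%:~R (fc i x0) (fc j x0) c k pq).
Proof.
elim: k c pq => [|k IH] c pq /=; first by rewrite mul1mx.
rewrite W_rcons -mulmxA -IH; congr (_ *m _).
case: c; rewrite sref_vec /vec2 !fcD !fcZ !fc_alpha !Hdiag /=;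
  apply/matrixP => k1 l; rewrite !mxE; ring.
Qed.

Lemma Kw_altb i j c k : Kw [set i; j] (altb i j c k).
Proof.
elim: k c => [|k IH] c //=; rewrite /Kw all_rcons; apply/andP; split.
  by case: c; rewrite !inE eqxx ?orbT.
exact: IH.
Qed.

Lemma altb_split i j c d m :
  exists t, altb i j c (d + m) = t ++ altb i j c m.
Proof.
elim: m c => [|m IH] c; first by exists (altb i j c d); rewrite addn0 cats0.
have [t ht] := IH (~~ c); exists t; by rewrite addnS /= ht rcons_cat.
Qed.

Lemma alt_rep i j (ij : i != j) s : Kw [set i; j] s ->
  exists c k, (k <= size s)%N /\ W s = W (altb i j c k).
Proof.
elim/last_ind: s => [|s l IH]; first by move=> _; exists true, 0%N.
rewrite /Kw all_rcons => /andP [lI Ks]; have [c [k [ks Ws]]] := IH Ks.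
rewrite size_rcons W_rcons Ws.
case: k ks Ws => [|k] ks Ws.
  exists (l == i), 1%N; split => //=; rewrite mul1mx.
  rewrite mulmx1; move: lI; rewrite !inE; case: eqP => [->|_] //= /eqP -> //.
case: (eqVneq l (if c then i else j)) => [el|nl].
  exists (~~ c), k; split; first by apply: leqW; apply: ltnW.
  by rewrite /= W_rcons -mulmxA el sref_invol mulmx1.
exists (~~ c), k.+2; split; first by [].
have -> : altb i j (~~ c) k.+2 = rcons (altb i j c k.+1) (if ~~ c then i else j).
  by clear Ws nl; case: c.
rewrite W_rcons; congr (_ *m sref A _).
clear Ws; move: lI nl; rewrite !inE; case: c => /orP [] /eqP -> /=; rewrite ?eqxx //.
Qed.


Lemma size_altb i j c k : size (altb i j c k) = k.
Proof. by elim: k c => [|k IH] c //=; rewrite size_rcons IH. Qed.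

Lemma dihedral_gen i j (ij : i != j) m :
  (0 < m)%N ->
  W (altb i j true m) = W (altb i j false m) ->
  (forall k, (k < m)%N ->
     0 <= (Gf (A i j)%:~R (A j i)%:~R 0 0 false k (1, 0)).1 /\
     0 <= (Gf (A i j)%:~R (A j i)%:~R 0 0 false k (1, 0)).2) ->
  forall vI, inWJ A [set i; j] vI ->
  (lenK [set i; j] vI <= lenK [set i; j] (vI *m sref A i))%N ->
  exists p q, [/\ 0 <= p, 0 <= q & vI *m alpha i = p *: alpha i + q *: alpha j].
Proof.
move=> m0 braid nn vI HvI Hlen.
have [s [Ks szs Ws]] := lenK_word HvI.
have [c [k [ks Wk]]] := alt_rep ij Ks.
have WvI : W (altb i j c k) = vI by rewrite -Wk.
have kL : (lenK [set i; j] vI <= k)%N.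
  by have := lenK_min (Kw_altb i j c k) WvI; rewrite size_altb.
have eL : k = lenK [set i; j] vI by apply/eqP; rewrite eqn_leq kL -szs ks.
case: k ks Wk WvI kL eL => [|k] ks Wk WvI kL eL.
  exists 1, 0; split => //; rewrite -WvI /= mul1mx scale1r scale0r addr0 //.
have contra : forall t, Kw [set i; j] t -> W t = vI *m sref A i ->
    (size t <= k)%N -> False.
  move=> t Kt Wt szt; have := lenK_min Kt Wt.
  move=> h; have := leq_trans Hlen (leq_trans h szt); rewrite -eL ltnn //.
case: c Wk WvI => Wk WvI.
  apply: False_ind; apply: (contra (altb i j false k)); first exact: Kw_altb.
    by rewrite -WvI /= W_rcons -mulmxA sref_invol mulmx1.
  by rewrite size_altb.
case: (leqP m k.+1) => km.
  have [t ht] := altb_split i j false (k.+1 - m) m.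
  rewrite subnK // in ht.
  have Kt : Kw [set i; j] t.
    by have := Kw_altb i j false k.+1; rewrite ht Kw_cat => /andP [].
  case: m m0 braid nn km ht => [|m] // _ braid nn km ht.
  apply: False_ind; apply: (contra (t ++ altb i j false m)).
  - by rewrite Kw_cat Kt Kw_altb.
  - rewrite -WvI ht !W_cat -braid /= W_rcons mulmxA -(mulmxA _ (sref A i)).
    by rewrite sref_invol mulmx1.
  - have := congr1 size ht; rewrite size_cat !size_altb => e.
    by rewrite size_cat size_altb; move: e km; clear; lia.
have := nn _ km; set pq := Gf _ _ _ _ _ _ _ => -[p0 q0].
exists pq.1, pq.2; split => //.
have := act_altb i j 0 false k.+1 (1, 0); rewrite !fc0 !add0r -/pq WvI.
rewrite /vec2 /= scale1r scale0r addr0 => ->.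
by [].
Qed.


Lemma braid_of i j m :
  (forall cc ee, Gf (A i j)%:~R (A j i)%:~R cc ee true m (0, 0) =
                 Gf (A i j)%:~R (A j i)%:~R cc ee false m (0, 0)) ->
  W (altb i j true m) = W (altb i j false m).
Proof.
move=> h; apply: mx_ext_vec => x.
have := act_altb i j x true m (0, 0); have := act_altb i j x false m (0, 0).
by rewrite /vec2 /= !scale0r !addr0 => -> ->; rewrite h.
Qed.

Definition dih_ok (a b : int) m :=
  (0 < m)%N /\
  (forall cc ee, Gf a%:~R b%:~R cc ee true m (0, 0) = Gf a%:~R b%:~R cc ee false m (0, 0)) /\
  (forall k, (k < m)%N -> 0 <= (Gf a%:~R b%:~R 0 0 false k (1, 0)).1 /\
                          0 <= (Gf a%:~R b%:~R 0 0 false k (1, 0)).2).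

Lemma dih00 : dih_ok 0 0 2.
Proof.
split => //; split; first by move=> cc ee /=; congr pair; ring.
by case=> [|[|[|]]] //= _; split; lra.
Qed.
Lemma dih11 : dih_ok (-1) (-1) 3.
Proof.
split => //; split; first by move=> cc ee /=; congr pair; ring.
by case=> [|[|[|[|]]]] //= _; split; lra.
Qed.
Lemma dih12 : dih_ok (-1) (-2) 4.
Proof.
split => //; split; first by move=> cc ee /=; congr pair; ring.
by case=> [|[|[|[|[|]]]]] //= _; split; lra.
Qed.
Lemma dih21 : dih_ok (-2) (-1) 4.
Proof.
split => //; split; first by move=> cc ee /=; congr pair; ring.
by case=> [|[|[|[|[|]]]]] //= _; split; lra.
Qed.
Lemma dih13 : dih_ok (-1) (-3) 6.
Proof.
split => //; split; first by move=> cc ee /=; congr pair; ring.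
by case=> [|[|[|[|[|[|[|]]]]]]] //= _; split; lra.
Qed.
Lemma dih31 : dih_ok (-3) (-1) 6.
Proof.
split => //; split; first by move=> cc ee /=; congr pair; ring.
by case=> [|[|[|[|[|[|[|]]]]]]] //= _; split; lra.
Qed.


Lemma sum2 i j (ij : i != j) (F : 'I_n -> rat) :
  (forall k, k != i -> k != j -> F k = 0) -> \sum_k F k = F i + F j.
Proof.
move=> h; rewrite (bigD1 i) //= (bigD1 j) /=; last by rewrite eq_sym.
by rewrite big1 ?addr0 // => k /andP [kj ki]; apply: h.
Qed.

Hypothesis hA : finite_type A.

Lemma ab_lt4 i j : i != j -> A i j * A j i < 4.
Proof.
move=> ij; have [_ [d [dpos _ pd]]] := hA.
pose x : 'cV[rat]_n := (- (A i j)%:~R) *: alpha i + 2%:R *: alpha j.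
have hxi : x i 0 = - (A i j)%:~R by rewrite !mxE !eqxx (negbTE ij) /= mulr1 mulr0 addr0.
have hxj : x j 0 = 2.
  by rewrite !mxE !eqxx eq_sym (negbTE ij) /= mulr0 add0r mulr1.
have hxk : forall k, k != i -> k != j -> x k 0 = 0.
  by move=> k ki kj; rewrite !mxE (negbTE ki) (negbTE kj) /=; ring.
have x0 : x != 0.
  by apply/eqP => h; have := congr1 (fun y : 'cV[rat]_n => y j 0) h; rewrite hxj mxE.
have := pd x x0; rewrite (sum2 ij); last first.
  by move=> k ki kj; rewrite hxk // !mul0r big1 // => l _; rewrite !mul0r.
rewrite (sum2 ij (F := fun l => x i 0 * d i * (A i l)%:~R * x l 0)); last first.
  by move=> l li lj; rewrite (hxk l) // mulr0.
rewrite (sum2 ij (F := fun l => x j 0 * d j * (A j l)%:~R * x l 0)); last first.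
  by move=> l li lj; rewrite (hxk l) // mulr0.
rewrite hxi hxj !Hdiag => h.
have : 0 < d j * (4 - (A i j * A j i)%:~R).
  by move: h; rewrite rmorphM /=; set a := (A i j)%:~R; set b := (A j i)%:~R; 
     move=> h; rewrite mulrBr; nra.
rewrite pmulr_rgt0 // subr_gt0 -[4 : rat]/((4 : int)%:~R) ltr_int //.
Qed.


Lemma int_pairs (a b : int) : a <= 0 -> b <= 0 -> (a = 0 -> b = 0) -> (b = 0 -> a = 0) -> a * b < 4 ->
  (a = 0 /\ b = 0) \/ (a = -1 /\ b = -1) \/ (a = -1 /\ b = -2) \/ (a = -2 /\ b = -1) \/
  (a = -1 /\ b = -3) \/ (a = -3 /\ b = -1).
Proof. move=> *. nia. Qed.

Lemma dih_pair i j : i != j -> exists m, dih_ok (A i j) (A j i) m.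
Proof.
move=> ij; have [[_ hneg hzero] _] := hA.
have := int_pairs (hneg i j ij) (hneg j i _) _ _ (ab_lt4 ij).
rewrite eq_sym ij => /(_ isT).
have z1 : A i j = 0 -> A j i = 0 by move=> e; apply/eqP; rewrite -hzero e.
have z2 : A j i = 0 -> A i j = 0 by move=> e; apply/eqP; rewrite hzero e.
move=> /(_ z1 z2).
case=> [[-> ->]|[[-> ->]|[[-> ->]|[[-> ->]|[[-> ->]|[-> ->]]]]]].
- by exists 2%N; exact: dih00.
- by exists 3%N; exact: dih11.
- by exists 4%N; exact: dih12.
- by exists 4%N; exact: dih21.
- by exists 6%N; exact: dih13.
- by exists 6%N; exact: dih31.
Qed.

Lemma dihedral i j (ij : i != j) vI : inWJ A [set i; j] vI ->
  (lenK [set i; j] vI <= lenK [set i; j] (vI *m sref A i))%N ->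
  exists p q, [/\ 0 <= p, 0 <= q & vI *m alpha i = p *: alpha i + q *: alpha j].
Proof.
have [m [m0 [br nn]]] := dih_pair ij.
apply: (dihedral_gen ij m0 _ nn); exact: braid_of.
Qed.


Definition nonneg (x : 'cV[rat]_n) := forall k, 0 <= x k 0.
Definition nonpos (x : 'cV[rat]_n) := forall k, x k 0 <= 0.

Lemma nonneg_alpha i : nonneg (alpha i).
Proof. by move=> k; rewrite mxE ler0n. Qed.

Lemma nonneg_comb (x y : 'cV[rat]_n) p q : nonneg x -> nonneg y -> 0 <= p -> 0 <= q ->
  nonneg (p *: x + q *: y).
Proof. by move=> hx hy hp hq k; rewrite !mxE addr_ge0 // mulr_ge0. Qed.

Lemma inWJ_sub K K' M : K \subset K' -> inWJ A K M -> inWJ A K' M.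
Proof.
move=> sub [s [Ks ->]]; exists s; split => //.
by apply/allP => l /(allP Ks); apply: (subsetP sub).
Qed.

Theorem Tpos K x i : inWJ A K x -> i \in K ->
  (lenK K x <= lenK K (x *m sref A i))%N -> nonneg (x *m alpha i).
Proof.
move: {2}(lenK K x) (erefl (lenK K x)) => N.
elim/ltn_ind: N x i => N IH x i Nx Hx iK Hlen.
case: N IH Nx => [|N] IH Nx.
  by rewrite (lenK_0 Hx Nx) mul1mx; apply: nonneg_alpha.
have [s [Ks szs Ws]] := lenK_word Hx.
case/lastP: s Ks szs Ws => [|s' j]; first by rewrite Nx.
rewrite /Kw all_rcons size_rcons => /andP [jK Ks'] [szs'] Ws.
have xsj : x *m sref A j = W s'.
  by rewrite -Ws W_rcons -mulmxA sref_invol mulmx1.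
have Ls' : (lenK K (W s') <= N)%N.
  have -> : N = size s' by apply/eqP; rewrite -eqSS szs' Nx.
  exact: lenK_min.
have ij : i != j.
  apply/eqP => eij; move: Hlen; rewrite eij xsj Nx => h.
  by have := leq_trans h Ls'; rewrite ltnn.
pose I := [set i; j].
have IK : I \subset K by apply/subsetP => l; rewrite !inE => /orP [] /eqP ->.
have iI : i \in I by rewrite !inE eqxx.
have jI : j \in I by rewrite !inE eqxx orbT.
pose Q k := exists v vI, [/\ inWJ A K v, inWJ A I vI, x = v *m vI,
   (lenK K v + lenK I vI <= lenK K x)%N & lenK K v = k].
have Q0 : Q (lenK K (W s')).
  exists (W s'), (sref A j); split => //.
  - by exists s'.
  - exact: inWJ_sref.
  - by rewrite -xsj -mulmxA sref_invol mulmx1.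
  - by rewrite Nx -addn1 leq_add // lenK_sref.
have [k [[v [vI [Kv IvI exv Lv ek]]] kmin]] := ex_min_nat (ex_intro _ _ Q0).
have kN : (k < N.+1)%N by rewrite ltnS; apply: leq_trans Ls'; apply: kmin.
have vdesc : forall l, l \in I -> (lenK K v <= lenK K (v *m sref A l))%N.
  move=> l lI; have lK : l \in K by apply: (subsetP IK).
  rewrite leqNgt; apply/negP => lt.
  have : Q (lenK K (v *m sref A l)).
    exists (v *m sref A l), (sref A l *m vI); split => //.
    - by apply: inWJ_mul => //; apply: inWJ_sref.
    - by apply: inWJ_mul => //; apply: inWJ_sref.
    - by rewrite mulmxA -(mulmxA v) sref_invol mulmx1.
    - apply: leq_trans Lv; have := lenK_mull IvI lI.
      move: lt; clear; lia.
  by move=> /kmin; rewrite -ek leqNgt lt.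
have vi := IH k kN v i ek Kv iK (vdesc i iI).
have vj := IH k kN v j ek Kv jK (vdesc j jI).
have HvI : (lenK I vI <= lenK I (vI *m sref A i))%N.
  rewrite leqNgt; apply/negP => lt; move: Hlen.
  have IvIi : inWJ A I (vI *m sref A i) by apply: inWJ_mul => //; apply: inWJ_sref.
  have h1 := lenK_mul Kv (inWJ_sub IK IvIi).
  have h2 := lenK_sub IK IvIi.
  rewrite exv -mulmxA; move: h1 h2 lt Lv; rewrite -exv; clear; lia.
have [p [q [p0 q0 e]]] := dihedral ij IvI HvI.
by rewrite exv -mulmxA e mulmxDr -!scalemxAr; apply: nonneg_comb.
Qed.


Lemma nn_np0 (y : 'cV[rat]_n) : nonneg y -> nonpos y -> y = 0.
Proof.
move=> h1 h2; apply/matrixP => k l; rewrite ord1 mxE.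
by apply/eqP; rewrite eq_le h1 h2.
Qed.

Lemma xalpha_neq0 K x i : inWJ A K x -> x *m alpha i != 0.
Proof.
move=> Hx; apply/eqP => h; have := congr1 (mulmx (invmx x)) h.
rewrite mulmxA mulVmx ?mul1mx ?mulmx0; last exact: inWJ_unit Hx.
move/(congr1 (fun y : 'cV[rat]_n => y i 0)); rewrite !mxE !eqxx /=.
by move/eqP; rewrite oner_eq0.
Qed.

Lemma nonpos_opp (y : 'cV[rat]_n) : nonneg (- y) -> nonpos y.
Proof. by move=> h k; have := h k; rewrite mxE oppr_ge0. Qed.

Lemma Tneg K x i : inWJ A K x -> i \in K ->
  (lenK K (x *m sref A i) <= lenK K x)%N -> nonpos (x *m alpha i).
Proof.
move=> Hx iK h; apply: nonpos_opp.
have Hxi : inWJ A K (x *m sref A i) by apply: inWJ_mul => //; apply: inWJ_sref.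
have := Tpos Hxi iK; rewrite -mulmxA sref_invol mulmx1 => /(_ h).
by rewrite -mulmxA sref_alpha_self mulmxN.
Qed.

Lemma Tgt K x i : inWJ A K x -> i \in K -> nonneg (x *m alpha i) ->
  (lenK K x < lenK K (x *m sref A i))%N.
Proof.
move=> Hx iK h; rewrite ltnNge; apply/negP => le.
by move: (xalpha_neq0 i Hx); rewrite (nn_np0 h (Tneg Hx iK le)) eqxx.
Qed.

Lemma Tlt K x i : inWJ A K x -> i \in K -> nonpos (x *m alpha i) ->
  (lenK K (x *m sref A i) < lenK K x)%N.
Proof.
move=> Hx iK h; rewrite ltnNge; apply/negP => le.
by move: (xalpha_neq0 i Hx); rewrite (nn_np0 (Tpos Hx iK le) h) eqxx.
Qed.

Lemma Tsign K x i : inWJ A K x -> i \in K ->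
  nonneg (x *m alpha i) \/ nonpos (x *m alpha i).
Proof.
move=> Hx iK; case: (leqP (lenK K x) (lenK K (x *m sref A i))) => h.
  by left; apply: (Tpos Hx iK h).
by right; apply: (Tneg Hx iK); apply: ltnW.
Qed.

Lemma invmx_srefM K x i : inWJ A K x ->
  invmx (sref A i *m x) = invmx x *m sref A i.
Proof.
move=> [s [_ ->]]; rewrite -W_cons !W_inv rev_cons W_rcons //.
Qed.

Lemma TLgt K x i : inWJ A K x -> i \in K -> nonneg (invmx x *m alpha i) ->
  (lenK K x < lenK K (sref A i *m x))%N.
Proof.
move=> Hx iK h.
have Hix : inWJ A K (sref A i *m x) by apply: inWJ_mul => //; apply: inWJ_sref.
rewrite -(lenK_inv Hx) -(lenK_inv Hix) (invmx_srefM i Hx).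
by apply: Tgt => //; apply: inWJ_inv.
Qed.

Lemma TLpos K x i : inWJ A K x -> i \in K -> (lenK K x < lenK K (sref A i *m x))%N ->
  nonneg (invmx x *m alpha i).
Proof.
move=> Hx iK h.
have Hix : inWJ A K (sref A i *m x) by apply: inWJ_mul => //; apply: inWJ_sref.
apply: (Tpos (inWJ_inv Hx) iK).
rewrite -(invmx_srefM i Hx) (lenK_inv Hx) (lenK_inv Hix); exact: ltnW.
Qed.

Definition intmx (M : 'M[rat]_n) := exists B : 'M[int]_n, M = map_mx intr B.

Lemma intmx_W s : intmx (W s).
Proof.
elim: s => [|i s [B eB]]; first by exists 1%:M; rewrite W_nil map_mx1.
rewrite W_cons eB.
exists ((\matrix_(k, l) ((k == l)%:Z - (k == i)%:Z * A i l)) *m B).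
rewrite map_mxM; congr (_ *m _); apply/matrixP => k l; rewrite !mxE.
by rewrite rmorphB rmorphM /= !pmulrn.
Qed.

Lemma int_unit1 (c e : int) : 0 <= c -> c * e = 1 -> c = 1.
Proof.
move=> c0 h; have := @intUnitRing.unitzPl c e; rewrite mulrC => /(_ h).
rewrite /intUnitRing.unitz; case: c c0 {h} => [[|[|k]]|k] //=.
Qed.

Lemma keyL x i j : inW A x -> nonneg (x *m alpha j) ->
  nonpos (sref A i *m (x *m alpha j)) -> x *m alpha j = alpha i.
Proof.
move=> [s ->] hnn hnp; set beta := W s *m alpha j.
have hk : forall k, k != i -> beta k 0 = 0.
  move=> k ki; apply/eqP; rewrite eq_le hnn andbT.
  by have := hnp k; rewrite sref_vec !mxE (negbTE ki) /= mulr0 subr0.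
have eb : beta = beta i 0 *: alpha i.
  apply/matrixP => k l; rewrite ord1 [RHS]mxE /alpha [delta_mx i 0 k 0]mxE.
  case: (eqVneq k i) => [->|ki] /=; first by rewrite mulr1.
  by rewrite hk // mulr0.
have ebi : beta i 0 = W s i j by rewrite /beta /alpha -colE mxE.
have [B eB] := intmx_W s; have [C eC] := intmx_W (rev s).
have : alpha j = beta i 0 *: (W (rev s) *m alpha i).
  by rewrite scalemxAr -eb /beta mulmxA W_rev_mul mul1mx.
move/(congr1 (fun y : 'cV[rat]_n => y j 0)).
rewrite [LHS]mxE !eqxx /= [RHS]mxE /alpha -colE [col _ _ _ _]mxE ebi eB eC !mxE -rmorphM /=.
move=> /esym /eqP; rewrite -[1 : rat]/((1 : int)%:~R) eqr_int => /eqP e1.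
have h0 : 0 <= B i j by have := hnn i; rewrite -/beta ebi eB mxE ler0z.
by rewrite eb ebi eB mxE (int_unit1 h0 e1) scale1r.
Qed.


Section Form.
Variable d : 'I_n -> rat.
Hypothesis dsym : forall i j, d i * (A i j)%:~R = d j * (A j i)%:~R.

Definition Bf (u v : 'cV[rat]_n) := \sum_k u k 0 * (d k * fc k v).

Lemma BfDl u u' v : Bf (u + u') v = Bf u v + Bf u' v.
Proof. by rewrite /Bf -big_split /=; apply: eq_bigr => k _; rewrite mxE mulrDl. Qed.
Lemma BfZl c u v : Bf (c *: u) v = c * Bf u v.
Proof. by rewrite /Bf big_distrr /=; apply: eq_bigr => k _; rewrite mxE -mulrA. Qed.
Lemma BfNl u v : Bf (- u) v = - Bf u v.
Proof. by rewrite -scaleN1r BfZl mulN1r. Qed.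
Lemma BfBl u u' v : Bf (u - u') v = Bf u v - Bf u' v.
Proof. by rewrite BfDl BfNl. Qed.
Lemma BfDr u v v' : Bf u (v + v') = Bf u v + Bf u v'.
Proof. by rewrite /Bf -big_split /=; apply: eq_bigr => k _; rewrite fcD; ring. Qed.
Lemma BfZr c u v : Bf u (c *: v) = c * Bf u v.
Proof. by rewrite /Bf big_distrr /=; apply: eq_bigr => k _; rewrite fcZ; ring. Qed.
Lemma BfNr u v : Bf u (- v) = - Bf u v.
Proof. by rewrite -scaleN1r BfZr mulN1r. Qed.
Lemma BfBr u v v' : Bf u (v - v') = Bf u v - Bf u v'.
Proof. by rewrite BfDr BfNr. Qed.

Lemma Bf_alpha_l k0 v : Bf (alpha k0) v = d k0 * fc k0 v.
Proof.
rewrite /Bf (bigD1 k0) //= big1 ?addr0; first by rewrite mxE !eqxx mul1r.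
by move=> k /negbTE kk; rewrite mxE kk mul0r.
Qed.

Lemma Bf_sym u v : Bf u v = Bf v u.
Proof.
rewrite /Bf /fc.
under eq_bigr => k _ do rewrite mxE big_distrr big_distrr /=.
under [RHS]eq_bigr => k _ do rewrite mxE big_distrr big_distrr /=.
rewrite exchange_big /=; apply: eq_bigr => l _; apply: eq_bigr => k _.
rewrite !mxE; have := dsym k l; move: (d k) (d l) (A k l)%:~R (A l k)%:~R => a b c e h.
by transitivity ((a * c) * (u k 0 * v l 0)); [ring | rewrite h; ring].
Qed.

Lemma Bf_sref i u v : Bf (sref A i *m u) (sref A i *m v) = Bf u v.
Proof.
rewrite !sref_vec !(BfBl, BfBr, BfZl, BfZr) ![Bf _ (alpha i)]Bf_sym !Bf_alpha_l fc_alpha Hdiag.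
ring.
Qed.

Lemma Bf_W s u v : Bf (W s *m u) (W s *m v) = Bf u v.
Proof. by elim: s u v => [|i s IH] u v /=; rewrite ?mul1mx // -!mulmxA Bf_sref IH. Qed.

End Form.

Lemma conjL x i j : inW A x -> x *m alpha j = alpha i -> sref A i *m x = x *m sref A j.
Proof.
move=> [s ->] e; have [_ [d [dpos dsym _]]] := hA.
have dij : d i = d j.
  have := Bf_W dsym s (alpha j) (alpha j); rewrite e !Bf_alpha_l !fc_alpha !Hdiag.
  by move=> h; lra.
apply: mx_ext => k; rewrite -!mulmxA sref_vec sref_alpha mulmxBr -scalemxAr e.
congr (_ - _ *: _).
have := Bf_W dsym s (alpha j) (alpha k); rewrite e !Bf_alpha_l fc_alpha -dij.
by move/mulfI; apply; rewrite gt_eqF.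
Qed.


Section Parabolic.
Variable J : {set 'I_n}.
Local Notation T := [set: 'I_n].

Definition Pj (a : 'M[rat]_n) := inW A a /\ forall j, j \in J -> nonneg (a *m alpha j).

Lemma minrep_P w : minrep A J w -> Pj w.
Proof.
move=> [hw hmin]; split => // j jJ.
have := hmin (sref A j) (inWJ_sref jJ); rewrite !wlenE => h.
exact: (Tpos (proj1 (inW_WJ w) hw) (in_setT j) h).
Qed.

Lemma WJ_fix b (x : 'cV[rat]_n) k : inWJ A J b -> k \notin J -> (b *m x) k 0 = x k 0.
Proof.
move=> [s [Js ->]] kJ; elim: s Js x => [|l s IH] /=; first by move=> _ x; rewrite mul1mx.
move=> /andP [lJ Js] x; rewrite -mulmxA sref_vec; set y := W s *m x; rewrite !mxE.
have -> : (k == l) = false by apply/eqP => e; move: kJ; rewrite e lJ.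
by rewrite mulr0 subr0 -[RHS](IH Js x) [RHS]mxE.
Qed.

Lemma comb_nonpos a (y : 'cV[rat]_n) : (forall j, j \in J -> nonneg (a *m alpha j)) ->
  nonpos y -> (forall k, k \notin J -> y k 0 = 0) -> nonpos (a *m y).
Proof.
move=> ha hy hz m; rewrite mxE; apply: sumr_le0 => k _.
case: (boolP (k \in J)) => kJ; last by rewrite hz // mulr0.
have := ha k kJ m; rewrite /alpha -colE mxE => h.
by rewrite mulr_ge0_le0.
Qed.

Lemma alpha_out j k : j \in J -> k \notin J -> alpha j k 0 = 0.
Proof.
move=> jJ kJ; rewrite mxE; case: (eqVneq k j) => [e|] //=.
by move: kJ; rewrite e jJ.
Qed.

Lemma uniqP a a' b b' : Pj a -> Pj a' -> inWJ A J b -> inWJ A J b' ->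
  a *m b = a' *m b' -> a = a'.
Proof.
move=> [ha hna] [ha' hna'] hb hb' e.
set c := b' *m invmx b.
have hc : inWJ A J c by apply: inWJ_mul => //; apply: inWJ_inv.
have eac : a = a' *m c.
  by rewrite /c mulmxA -e -mulmxA mulmxV ?mulmx1 //; apply: (inWJ_unit hb).
case: (eqVneq (lenK J c) 0%N) => [c0|cn0].
  by rewrite eac (lenK_0 hc c0) mulmx1.
apply: False_ind.
have [s [Js szs Ws]] := lenK_word hc.
case/lastP: s Js szs Ws => [|s' j]; first by move=> _ /esym/eqP; rewrite (negbTE cn0).
rewrite /Kw all_rcons size_rcons => /andP [jJ Js'] szs Ws.
have csj : c *m sref A j = W s' by rewrite -Ws W_rcons -mulmxA sref_invol mulmx1.
have lt : (lenK J (c *m sref A j) <= lenK J c)%N.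
  by rewrite csj -szs; apply: leqW; apply: lenK_min.
have np := Tneg hc jJ lt.
have hz : forall k, k \notin J -> (c *m alpha j) k 0 = 0.
  by move=> k kJ; rewrite WJ_fix // alpha_out.
have np' := comb_nonpos hna' np hz.
have hx := xalpha_neq0 j (proj1 (inW_WJ a) ha).
move: hx; rewrite (nn_np0 (hna j jJ)) ?eqxx //.
by rewrite eac -mulmxA.
Qed.

Lemma invmx_mul a b : inW A a -> inW A b -> invmx (a *m b) = invmx b *m invmx a.
Proof.
move=> [s ->] [t ->]; by rewrite -W_cat !W_inv rev_cat W_cat.
Qed.

Lemma stepL a b i : Pj a -> inWJ A J b ->
  (lenK T (a *m b) < lenK T (sref A i *m (a *m b)))%N ->
  (Pj (sref A i *m a) /\ (lenK T a < lenK T (sref A i *m a))%N) \/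
  (exists2 j, j \in J & a *m alpha j = alpha i /\ sref A i *m a = a *m sref A j).
Proof.
move=> [ha hna] hb hlt.
have haT := proj1 (inW_WJ a) ha.
have hbW : inW A b by case: hb => s [_ ->]; exists s.
have habT : inWJ A T (a *m b) by apply: inWJ_mul => //; apply: inWJ_sub hb; apply: subsetT.
have hsaW : inW A (sref A i *m a) by case: ha => s ->; exists (i :: s).
have hsaT := proj1 (inW_WJ _) hsaW.
case: (classic (forall j, j \in J -> nonneg (sref A i *m a *m alpha j))) => [hall|hno].
  left; split; first by split.
  apply: (TLgt haT (in_setT i)).
  case: (Tsign (inWJ_inv haT) (in_setT i)) => // hnp; apply: False_ind.
  have := TLpos habT (in_setT i) hlt; rewrite invmx_mul // -mulmxA => hnn.
  have hz : forall k, k \notin J -> (invmx a *m alpha i) k 0 = 0.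
    move=> k kJ; apply/eqP; rewrite eq_le hnp /=.
    by have := hnn k; rewrite WJ_fix //; apply: inWJ_inv.
  have := comb_nonpos hna hnp hz; rewrite mulmxA mulmxV ?mul1mx; last exact: inWJ_unit haT.
  by move/(_ i); rewrite mxE !eqxx /= ler10.
right.
have [j [jJ hnj]] : exists j, j \in J /\ ~ nonneg (sref A i *m a *m alpha j).
  by apply: NNPP => h; apply: hno => j jJ; apply: NNPP => h'; apply: h; exists j.
have np : nonpos (sref A i *m a *m alpha j).
  by case: (Tsign hsaT (in_setT j)).
rewrite -mulmxA in np.
have e := keyL ha (hna j jJ) np.
exists j => //; split => //; exact: conjL.
Qed.



Lemma inW_inv x : inW A x -> inW A (invmx x).
Proof. by move=> [s ->]; exists (rev s); rewrite W_inv. Qed.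

Lemma inW_unit x : inW A x -> x \in unitmx.
Proof. by move=> [s ->]; apply: W_unit. Qed.

Lemma chain t : forall a b, Pj a -> inWJ A J b ->
  lenK T (W t *m (a *m b)) = (lenK T (a *m b) + size t)%N ->
  exists a' b', [/\ Pj a', inWJ A J b', W t *m (a *m b) = a' *m b', bruhat_le A a a' &
     ((lenK T a <= lenK T a')%N /\
     (lenK T a' = lenK T a -> a' = a /\
        forall i, i \in t -> exists2 j, j \in J & a *m alpha j = alpha i))].
Proof.
elim: t => [|i t IH] a b Pa hb hlen.
  exists a, b; split => //; first by rewrite mul1mx.
  exact: bruhat_refl.
have hxT : inWJ A T (a *m b).
  apply: inWJ_mul; first exact: (proj1 (inW_WJ a) (proj1 Pa)).
  by apply: inWJ_sub hb; apply: subsetT.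
have hWt : inWJ A T (W t) by exists t; split => //; apply/allP => l; rewrite in_setT.
have hyT : inWJ A T (W t *m (a *m b)) by apply: inWJ_mul.
have l1 := lenK_mull hyT (in_setT i).
have l2 := lenK_mul hWt hxT.
have l3 : (lenK T (W t) <= size t)%N by apply: lenK_min => //; apply/allP => l; rewrite in_setT.
move: hlen; rewrite W_cons -mulmxA /= => hlen.
have ey : lenK T (W t *m (a *m b)) = (lenK T (a *m b) + size t)%N.
  by move: l1 l2 l3 hlen; clear; lia.
have [a1 [b1 [Pa1 hb1 e1 br [le1 eqc]]]] := IH a b Pa hb ey.
have hlt : (lenK T (a1 *m b1) < lenK T (sref A i *m (a1 *m b1)))%N.
  by rewrite -e1; move: l1 l2 l3 hlen; clear; lia.
have ha1W := proj1 Pa1.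
case: (stepL Pa1 hb1 hlt) => [[Psa lt]|[j jJ [eaj econj]]].
  exists (sref A i *m a1), b1; split => //.
  - by rewrite e1 mulmxA.
  - have -> : sref A i *m a1 = a1 *m (invmx a1 *m sref A i *m a1).
      by rewrite !mulmxA mulmxV ?mul1mx //; apply: inW_unit.
    apply: bruhat_step => //.
      exists (invmx a1), i; split; first exact: inW_inv.
      by rewrite invmxK.
    rewrite !mulmxA mulmxV ?mul1mx; last exact: inW_unit.
    by rewrite !wlenE.
  - split; first by move: le1 lt; clear; lia.
    by move=> e; move: le1 lt; rewrite e; clear; lia.
exists a1, (sref A j *m b1); split => //.
- by apply: inWJ_mul => //; apply: inWJ_sref.
- by rewrite e1 mulmxA econj -mulmxA.
- split => // e; have [-> hrest] := eqc e; split => // l; rewrite in_cons.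
  case/orP => [/eqP ->|lt]; last exact: hrest.
  exists j => //; have [e' _] := eqc e; by rewrite -e'.
Qed.

End Parabolic.

End Basics.

Unset Implicit Arguments.

Theorem lemma5p8 (n : nat) (A : 'M[int]_n) (hA : finite_type A)
  (J : {set 'I_n}) (u w v w' v' : 'M[rat]_n) :
  inW A u -> minrep A J w -> inWJ A J v ->
  minrep A J w' -> inWJ A J v' ->
  u *m w *m v = w' *m v' ->
  (wlen A (u *m w *m v) + wlen A u = wlen A (w *m v))%N ->
  bruhat_le A w' w /\
  (w' = w -> forall i, supp A u i -> exists2 j, j \in J & invmx w *m alpha i = alpha j).
Proof.
move=> hu hw hv hw' hv' heq hlen.
have Hdiag : forall i, A i i = 2 by case: hA => [[]].
have Pw := minrep_P Hdiag hA hw; have Pw' := minrep_P Hdiag hA hw'.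
have key : forall s, word_mx A s = u -> size s = wlen A u ->
  exists a', [/\ Pj A J a', a' = w, bruhat_le A w' a' &
     (lenK A [set: 'I_n] a' = lenK A [set: 'I_n] w' ->
        forall i, i \in rev s -> exists2 j, j \in J & w' *m alpha j = alpha i)].
  move=> s Ws szs.
  have hc : lenK A [set: 'I_n] (word_mx A (rev s) *m (w' *m v')) =
            (lenK A [set: 'I_n] (w' *m v') + size (rev s))%N.
    move: hlen; rewrite !wlenE => hlen.
    rewrite -heq -Ws -!mulmxA mulmxA (W_rev_mul Hdiag) mul1mx size_rev szs -hlen Ws !mulmxA wlenE.
    by [].
    have [a' [b' [Pa' hb' e br [le eqc]]]] := chain Hdiag hA Pw' hv' hc.
  have ew : w = a'.
    apply: (uniqP Hdiag hA Pw Pa' hv hb'); rewrite -e -heq -Ws -!mulmxA mulmxA (W_rev_mul Hdiag) mul1mx //.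
  exists a'; split => //.
  by move=> el i hi; have [_ h] := eqc el; exact: h.
have [s [_ szs Ws]] := lenK_word (proj1 (inW_WJ _ u) hu).
have szs' : size s = wlen A u by rewrite wlenE.
have [a' [_ ea' br _]] := key s Ws szs'.
split; first by rewrite -ea'.
move=> ew' i [s0 [Ws0 [szs0 is0]]].
have [a'' [_ ea'' _ h]] := key s0 Ws0 szs0.
have hl : lenK A [set: 'I_n] a'' = lenK A [set: 'I_n] w' by rewrite ea'' ew'.
have his : i \in rev s0 by rewrite mem_rev.
have [j jJ ej] := h hl i his.
exists j => //; rewrite -ej ew' mulmxA mulVmx ?mul1mx //.
by case: hw => [[t ->] _]; apply: W_unit.
Qed.
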